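(* Let $z_1,\dots,z_n$ be distinct points of the unit circle and $\xi_1,\dots,\xi_m$ distinct points of $\mathbb{C}\setminus\{0\}$, distinct from the $z_j$. The following are equivalent: (1) the set $\{\xi_1,\dots,\xi_m\}$ is invariant under $\xi\mapsto1/\bar\xi$, and $\boldsymbol z,\boldsymbol\xi$ satisfy the stationary relations $$-\sum_{j=1}^n\frac{2}{\xi_k-z_j}+\sum_{l\neq k}\frac{4}{\xi_k-\xi_l}+\frac{n-2m+2}{\xi_k}=0,\qquad k=1,\dots,m;$$ (2) there exists a quadratic differential $Q(z)dz^2\in\mathcal{QD}_{m,n}(\boldsymbol z)$ whose poles (other than $0,\infty$) are $\xi_1,\dots,\xi_m$ and whose zeros (other than $0,\infty$) are $z_1,\dots,z_n$.
   Context: $\mathcal{QD}_{m,n}(\boldsymbol z)$ denotes the set of meromorphic quadratic differentials $Q(z)dz^2$ on the Riemann sphere such that: (1) $Q$ is involution symmetric, $\overline{Q(z^* )}\,\overline{(dz^* )^2}=Q(z)dz^2$ with $z^*=1/\bar z$, i.e. $Q(z)=z^{-4}\,\overline{Q(1/\bar z)}$; (2) $z_1,\dots,z_n$ are zeros of order exactly $2$; (3) $\xi_1,\dots,\xi_m$ are distinct finite nonzero poles of order $4$ at which the residue of $\sqrt{Q(z)}\,dz$ vanishes (this residue is well defined up to sign since the pole has even order); (4) $Q$ has a pole of order $n+2-2m$ at $0$ and at $\infty$ (a negative order meaning a zero of the opposite order); and $Q$ has no other zeros or poles. *)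

(* Defs.v *)
From HB Require Import structures.
From mathcomp Require Import all_boot all_order all_algebra.
From mathcomp Require Import reals.
From mathcomp Require Import complex.
Set Implicit Arguments. Unset Strict Implicit. Unset Printing Implicit Defensive.
Import Order.TTheory GRing.Theory Num.Theory.
Local Open Scope ring_scope.
Local Open Scope complex_scope.

Section QD.
Variable R : realType.
Notation C := (R[i]).

(* A meromorphic function on the Riemann sphere is a rational function;
   we represent Q = P / D with polynomials P, D (D <> 0).  The representation
   need not be reduced: orders are computed as differences of multiplicities. *)

Definition ord_at (P D : {poly C}) (a : C) : int :=
  (mup a P)%:Z - (mup a D)%:Z.

(* order of the QUADRATIC DIFFERENTIAL (P/D) dz^2 at infinity:
   in w = 1/z, Q(z) dz^2 = Q(1/w) w^-4 dw^2, so the order is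
   (deg D - deg P) - 4. *)
Definition qd_ord_inf (P D : {poly C}) : int :=
  ((size D)%:Z - (size P)%:Z) - 4.

(* the holomorphic nonvanishing part g of Q = (z - a)^(ord) * g near a *)
Definition loc_num (P : {poly C}) (a : C) : {poly C} :=
  P %/ ('X - a%:P) ^+ (mup a P).

Definition loc_val (P D : {poly C}) (a : C) : C :=
  (loc_num P a).[a] / (loc_num D a).[a].
Definition loc_der (P D : {poly C}) (a : C) : C :=
  ((loc_num P a)^`().[a] * (loc_num D a).[a]
     - (loc_num P a).[a] * (loc_num D a)^`().[a]) / ((loc_num D a).[a] ^+ 2).

(* At a pole a of order 4, Q = (z-a)^-4 (g(a) + g'(a)(z-a) + ...), and a square root
   of Q has Laurent expansion (z-a)^-2 (s0 + s1 (z-a) + ...) with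
   s0^2 = g(a), 2 s0 s1 = g'(a); the residue of sqrt(Q) dz at a is s1.
   It vanishes (for either choice of sign) iff every such s1 is 0. *)
Definition sqrt_res_vanishes (P D : {poly C}) (a : C) : Prop :=
  forall s0 s1 : C, s0 ^+ 2 = loc_val P D a ->
    2%:R * s0 * s1 = loc_der P D a -> s1 = 0.

Definition in_QD (m n : nat) (z : 'I_n -> C) (xi : 'I_m -> C) (P D : {poly C}) : Prop :=
  P != 0 /\ D != 0 /\
      (forall w : C, w != 0 -> D.[w] != 0 -> D.[(w^*)^-1] != 0 ->
         P.[w] / D.[w] = w ^- 4 * (P.[(w^*)^-1] / D.[(w^*)^-1])^*) /\
      (forall j, ord_at P D (z j) = 2) /\
      [/\ injective xi, (forall k, xi k != 0),
          (forall k, ord_at P D (xi k) = - 4) &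
          (forall k, sqrt_res_vanishes P D (xi k))] /\
      (ord_at P D 0 = - ((n%:Z) + 2 - 2 * (m%:Z)) /\
       qd_ord_inf P D = - ((n%:Z) + 2 - 2 * (m%:Z))) /\
      (forall a : C, a != 0 -> (forall j, a != z j) -> (forall k, a != xi k) ->
         ord_at P D a = 0).

End QD.

(* Main.v *)
Require Import Defs.
From HB Require Import structures.
From mathcomp Require Import all_boot all_order all_algebra.
From mathcomp Require Import reals complex.
From mathcomp Require Import ring zify.
Set Implicit Arguments. Unset Strict Implicit. Unset Printing Implicit Defensive.
Import Order.TTheory GRing.Theory Num.Theory.
Local Open Scope ring_scope.


Section Gen.
Variable F : fieldType.
Implicit Types p q : {poly F}.

Definition pw (b : F) (e : nat) : {poly F} := ('X - b%:P) ^+ e.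

Lemma pw_neq0 b e : pw b e != 0.
Proof. by rewrite /pw expf_neq0 // polyXsubC_eq0. Qed.

Lemma prod_pw_neq0 (I : finType) (P : pred I) b e :
  \prod_(i | P i) pw (b i) (e i) != 0.
Proof. by rewrite prodf_seq_neq0; apply/allP => i _; apply/implyP => _; apply: pw_neq0. Qed.

Lemma mup_prod_pw (I : finType) (P : pred I) b e a :
  mup a (\prod_(i | P i) pw (b i) (e i)) =
  (\sum_(i | P i) (if b i == a then e i else 0))%N.
Proof.
suff: \prod_(i | P i) pw (b i) (e i) != 0 /\ mup a (\prod_(i | P i) pw (b i) (e i)) =
  (\sum_(i | P i) (if b i == a then e i else 0))%N by case.
apply: (big_ind2 (fun p s => p != 0 /\ mup a p = s)).
- by split; [exact: oner_neq0 | rewrite mupNroot // root1].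
- move=> p1 s1 p2 s2 [h1 e1] [h2 e2]; split; first by rewrite mulf_neq0.
  by rewrite mupM // e1 e2.
- by move=> i _; split; [exact: pw_neq0 | rewrite /pw mup_XsubCX].
Qed.

Lemma mup_pw a b e : mup a (pw b e) = if b == a then e else 0%N.
Proof. by rewrite /pw mup_XsubCX. Qed.

Lemma mupC a c p : c != 0 -> mup a (c%:P * p) = mup a p.
Proof. by move=> c0; rewrite mupMr // rootC. Qed.

Lemma sum_if_one (I : finType) (P : pred I) (b : I -> F) (e : I -> nat) a i0 :
  injective b -> P i0 -> b i0 = a ->
  (\sum_(i | P i) (if b i == a then e i else 0))%N = e i0.
Proof.
move=> bi Pi0 ba; rewrite (bigD1 i0) //= ba eqxx big1 ?addn0 //.
move=> i /andP[_ ne]; case: ifP => // /eqP; rewrite -ba => /bi /eqP.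
by rewrite (negbTE ne).
Qed.

Lemma sum_if_none (I : finType) (P : pred I) (b : I -> F) (e : I -> nat) a :
  (forall i, P i -> b i != a) ->
  (\sum_(i | P i) (if b i == a then e i else 0))%N = 0%N.
Proof. by move=> h; rewrite big1 // => i /h /negbTE ->. Qed.

Definition LD (x : F) p (s : F) := p^`().[x] = p.[x] * s.

Lemma LD_mul x p q s t : LD x p s -> LD x q t -> LD x (p * q) (s + t).
Proof. rewrite /LD derivM !hornerE => -> ->; ring. Qed.

Lemma LD_pw x b e : x != b -> LD x (pw b e) (e%:R / (x - b)).
Proof.
move=> xb; rewrite /LD /pw deriv_exp derivXsubC mul1r hornerMn !horner_exp hornerXsubC.
have xb0 : x - b != 0 by rewrite subr_eq0.
case: e => [|e]; first by rewrite mulr0n mul0r mulr0.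
rewrite /= exprS -mulr_natr; field; done.
Qed.

Lemma LD_prod x (I : finType) (P : pred I) b e :
  (forall i, P i -> x != b i) ->
  LD x (\prod_(i | P i) pw (b i) (e i)) (\sum_(i | P i) (e i)%:R / (x - b i)).
Proof.
move=> h; apply: (big_ind2 (LD x)).
- by rewrite /LD derivC !hornerE.
- by move=> ? ? ? ? h1 h2; apply: (LD_mul h1 h2).
- by move=> i /h; apply: LD_pw.
Qed.

Lemma monic_prod_pw (I : finType) (P : pred I) b e :
  (\prod_(i | P i) pw (b i) (e i)) \is monic /\
  size (\prod_(i | P i) pw (b i) (e i)) = (\sum_(i | P i) e i).+1.
Proof.
apply: (big_ind2 (fun p s => p \is monic /\ size p = s.+1)).
- by rewrite monic1 size_poly1.
- move=> p1 s1 p2 s2 [m1 z1] [m2 z2]; split; first by rewrite monicMl.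
  by rewrite size_Mmonic ?monic_neq0 // z1 z2 addSn addnS.
- by move=> i _; rewrite /pw monic_exp ?monicXsubC // size_exp_XsubC.
Qed.

End Gen.

Lemma prod_const_ord (F : comNzRingType) n (x : F) : \prod_(j < n) x = x ^+ n.
Proof. by rewrite prodr_const card_ord. Qed.
Lemma sum_const_ord n k : (\sum_(j < n) k = k * n)%N.
Proof. by rewrite big_const_ord iter_addn_0. Qed.



Section Cx.
Variable R : realType.
Local Notation C := (R[i]).

Lemma refl_pw (w b : C) e : w != 0 ->
  ((pw b e).[(w^*)^-1])^* * w ^+ e = (1 - b^* * w) ^+ e.
Proof.
move=> w0; rewrite /pw horner_exp hornerXsubC rmorphXn /= -exprMn.
by rewrite rmorphB /= fmorphV /= conjCK mulrBl mulVf.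
Qed.

Lemma refl_prod (I : finType) (P : pred I) (b : I -> C) e (w : C) : w != 0 ->
  ((\prod_(i | P i) pw (b i) (e i)).[(w^*)^-1])^* * \prod_(i | P i) w ^+ e i
  = \prod_(i | P i) (1 - (b i)^* * w) ^+ e i.
Proof.
move=> w0; rewrite horner_prod rmorph_prod -big_split /=.
by apply: eq_bigr => i _; rewrite refl_pw.
Qed.

Lemma mup_eq_prop (p q : {poly C}) : p != 0 -> q != 0 ->
  (forall a, mup a p = mup a q) -> exists2 k, k != 0 & p = k *: q.
Proof.
move=> p0 q0 h.
have [rp ep] := closed_field_poly_normal p.
have [rq eqq] := closed_field_poly_normal q.
have lp0 : lead_coef p != 0 by rewrite lead_coef_eq0.
have lq0 : lead_coef q != 0 by rewrite lead_coef_eq0.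
have hc : forall (l : C) s a, l != 0 ->
    mup a (l *: \prod_(z <- s) ('X - z%:P)) = count_mem a s.
  by move=> l s a l0; rewrite -mul_polyC mupC // mu_prod_XsubC.
have pe : perm_eq rp rq.
  apply/allP => x _ /=; apply/eqP.
  by rewrite -(hc _ rp x lp0) -(hc _ rq x lq0) -ep -eqq h.
exists (lead_coef p / lead_coef q); first by rewrite mulf_neq0 ?invr_eq0.
have E2 : (lead_coef p / lead_coef q) *: q = lead_coef p *: \prod_(z <- rq) ('X - z%:P).
  by rewrite [X in _ *: X]eqq scalerA divfK.
by rewrite E2 {1}ep (perm_big _ pe).
Qed.

Lemma loc_decomp (p : {poly C}) a : p != 0 ->
  p = loc_num p a * ('X - a%:P) ^+ (mup a p) /\ ~~ root (loc_num p a) a.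
Proof.
move=> p0; have dv : ('X - a%:P) ^+ (mup a p) %| p by rewrite -mup_geq.
have e : p = loc_num p a * ('X - a%:P) ^+ (mup a p) by rewrite /loc_num divpK.
split=> //; apply/negP; rewrite -dvdp_XsubCl => d1.
have : ('X - a%:P) ^+ (mup a p).+1 %| p.
  by rewrite [X in _ %| X]e exprS; apply: dvdp_mul d1 (dvdpp _).
by rewrite -mup_geq // ltnn.
Qed.


Lemma sqrt_res_of (P D : {poly C}) a :
  loc_val P D a != 0 -> loc_der P D a = 0 -> sqrt_res_vanishes P D a.
Proof.
move=> v0 d0 s0 s1 e1; rewrite d0 => /eqP; rewrite !mulf_eq0 pnatr_eq0 /=.
case/orP => [/eqP s00|/eqP //]; move: v0; rewrite -e1 s00 expr0n /= eqxx //.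
Qed.

Lemma der_of_sqrt_res (P D : {poly C}) a :
  loc_val P D a != 0 -> sqrt_res_vanishes P D a -> loc_der P D a = 0.
Proof.
move=> v0 h; set s0 := sqrtC (loc_val P D a).
have s00 : s0 != 0 by rewrite sqrtC_eq0.
have := h s0 (loc_der P D a / (2%:R * s0)) (sqrtCK _).
have h2 : (2%:R : C) * s0 != 0 by rewrite mulf_neq0 // pnatr_eq0.
rewrite mulrC divfK // => /(_ erefl) /eqP.
by rewrite mulf_eq0 invr_eq0 (negbTE h2) orbF => /eqP.
Qed.

End Cx.

Lemma key_alg (F : fieldType) (a a' b b' u u' v v' k : F) :
  b != 0 -> k != 0 -> a * u = k * (b * v) ->
  a' * u + a * u' = k * (b' * v + b * v') -> a' * b - a * b' = 0 ->
  v' * u - v * u' = 0.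
Proof.
move=> b0 k0 h1 h2 h3.
have E : k * b ^+ 2 * (v' * u - v * u') =
  u * b * (k * (b' * v + b * v') - (a' * u + a * u'))
  + (u * b' + b * u') * (a * u - k * (b * v)) + u ^+ 2 * (a' * b - a * b').
  by ring.
move: E; rewrite h2 h1 h3 !subrr !mulr0 !addr0 => /eqP.
have kb : k * b ^+ 2 != 0 by rewrite mulf_neq0 ?expf_neq0.
by rewrite mulf_eq0 (negbTE kb) /= => /eqP.
Qed.

Lemma symdiff (F : fieldType) (m n : nat) (w a mm ms B A k kc : F) :
  w != 0 -> mm != 0 -> ms != 0 -> B != 0 ->
  k * (w ^+ (2 * m)%N * a) / (w ^+ (n + 2)%N * mm)
  - w ^- 4 * (kc * (A * a / w ^+ (2 * m + 2 * n)%N) / (B * ms / w ^+ (n + 2 + 4 * m)%N))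
  = a * (k * B * ms - kc * A * mm) * w ^+ (2 * m)%N / (w ^+ (n + 2)%N * mm * B * ms).
Proof.
move=> w0 mm0 ms0 B0.
have x0 : w ^+ m != 0 by rewrite expf_neq0.
have y0 : w ^+ n != 0 by rewrite expf_neq0.
rewrite !exprD expr0.
by field; rewrite ms0 B0 mm0 w0 x0 y0.
Qed.


Lemma alg_from_id (F : fieldType) (Pk Dk U V : {poly F}) x kp :
  Pk * U = kp%:P * (Dk * V) -> Dk.[x] != 0 -> kp != 0 ->
  Pk^`().[x] * Dk.[x] - Pk.[x] * Dk^`().[x] = 0 ->
  V^`().[x] * U.[x] - V.[x] * U^`().[x] = 0.
Proof.
move=> id nD kp0 h3.
have ev := congr1 (fun p => p.[x]) id.
have dv := congr1 (fun p => (p^`()).[x]) id.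
simpl in ev, dv.
rewrite !derivM derivC !hornerE in dv; rewrite !hornerE in ev.
have ev2 : Pk.[x] * U.[x] = kp * (Dk.[x] * V.[x]) by rewrite ev mulrA.
exact: key_alg nD kp0 ev2 dv h3.
Qed.



Section Main.
Variable R : realType.
Local Notation C := (R[i]).
Variables (m n : nat) (z : 'I_n -> C) (xi : 'I_m -> C).
Hypothesis hz_circ : forall j, `|z j| = 1.
Hypothesis hz_inj : injective z.
Hypothesis hxi_inj : injective xi.
Hypothesis hxi_nz : forall k, xi k != 0.
Hypothesis hxi_z : forall k j, xi k != z j.

Definition NN := \prod_(j < n) pw (z j) 2.
Definition MM := \prod_(l < m) pw (xi l) 4.
Definition Mk k := \prod_(l < m | l != k) pw (xi l) 4.
Definition P0 := pw 0 (2 * m)%N * NN.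
Definition D0 := pw 0 (n + 2)%N * MM.
Definition D0k k := pw 0 (n + 2)%N * Mk k.

Definition Ek k :=
      - (\sum_(j < n) 2%:R / (xi k - z j))
      + (\sum_(l < m | l != k) 4%:R / (xi k - xi l))
      + ((n%:Z - 2 * m%:Z + 2)%:~R) / xi k.

Lemma z_nz j : z j != 0.
Proof. by apply/negP => /eqP h; have := hz_circ j; rewrite h normr0 => /eqP; rewrite eq_sym oner_eq0. Qed.

Lemma zconj j : z j * (z j)^* = 1.
Proof. by rewrite -normCK hz_circ expr1n. Qed.

Lemma NN_neq0 : NN != 0. Proof. exact: prod_pw_neq0. Qed.
Lemma MM_neq0 : MM != 0. Proof. exact: prod_pw_neq0. Qed.
Lemma P0_neq0 : P0 != 0. Proof. by rewrite mulf_neq0 ?pw_neq0 ?NN_neq0. Qed.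
Lemma D0_neq0 : D0 != 0. Proof. by rewrite mulf_neq0 ?pw_neq0 ?MM_neq0. Qed.

Lemma mupP0 a : mup a P0 =
  ((if (0%R : C) == a then 2 * m else 0) + \sum_(j < n) (if z j == a then 2 else 0))%N.
Proof. by rewrite /P0 mupM ?pw_neq0 ?NN_neq0 // mup_pw /NN mup_prod_pw. Qed.

Lemma mupD0 a : mup a D0 =
  ((if (0%R : C) == a then n + 2 else 0) + \sum_(l < m) (if xi l == a then 4 else 0))%N.
Proof. by rewrite /D0 mupM ?pw_neq0 ?MM_neq0 // mup_pw /MM mup_prod_pw. Qed.

Lemma ord_z j : ord_at P0 D0 (z j) = 2.
Proof.
rewrite /ord_at mupP0 mupD0 eq_sym (negbTE (z_nz j)).
by rewrite (@sum_if_one _ _ xpredT _ _ _ j) // sum_if_none.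
Qed.

Lemma ord_xi k : ord_at P0 D0 (xi k) = - 4.
Proof.
rewrite /ord_at mupP0 mupD0 eq_sym (negbTE (hxi_nz k)).
rewrite (@sum_if_one _ _ xpredT _ _ _ k) // sum_if_none // => j _.
by rewrite eq_sym hxi_z.
Qed.

Lemma ord_0 : ord_at P0 D0 0 = - ((n%:Z) + 2 - 2 * (m%:Z)).
Proof.
rewrite /ord_at mupP0 mupD0 eqxx !sum_if_none; first by lia.
- by move=> l _; apply: hxi_nz.
- by move=> j _; apply: z_nz.
Qed.

Lemma ord_other a : a != 0 -> (forall j, a != z j) -> (forall k, a != xi k) ->
  ord_at P0 D0 a = 0.
Proof.
move=> a0 az ax; rewrite /ord_at mupP0 mupD0 eq_sym (negbTE a0) !sum_if_none //.
- by move=> l _; rewrite eq_sym ax.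
- by move=> j _; rewrite eq_sym az.
Qed.

Lemma D0_split k : D0 = pw (xi k) 4 * D0k k.
Proof. by rewrite /D0 /D0k /MM (bigD1 k) //= mulrCA. Qed.

Lemma P0_ne_xi k : P0.[xi k] != 0.
Proof.
rewrite /P0 /NN hornerM horner_prod mulf_neq0 //.
  by rewrite /pw horner_exp hornerXsubC expf_neq0 // subr0.
rewrite prodf_seq_neq0; apply/allP => j _; apply/implyP => _.
by rewrite /pw horner_exp hornerXsubC expf_neq0 // subr_eq0 hxi_z.
Qed.

Lemma D0k_ne_xi k : (D0k k).[xi k] != 0.
Proof.
rewrite /D0k /Mk hornerM horner_prod mulf_neq0 //.
  by rewrite /pw horner_exp hornerXsubC expf_neq0 // subr0.
rewrite prodf_seq_neq0; apply/allP => l _; apply/implyP => lk.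
rewrite /pw horner_exp hornerXsubC expf_neq0 // subr_eq0.
by apply/eqP => /hxi_inj e; rewrite e eqxx in lk.
Qed.

Lemma S_Ek k :
  P0^`().[xi k] * (D0k k).[xi k] - P0.[xi k] * (D0k k)^`().[xi k]
  = - (P0.[xi k] * (D0k k).[xi k]) * Ek k.
Proof.
have h1 : LD (xi k) P0 ((2 * m)%N%:R / (xi k - 0) + \sum_(j < n) 2%:R / (xi k - z j)).
  apply: LD_mul; first by apply: LD_pw; apply: hxi_nz.
  by apply: LD_prod => j _; apply: hxi_z.
have h2 : LD (xi k) (D0k k) ((n + 2)%N%:R / (xi k - 0) +
     \sum_(l < m | l != k) 4%:R / (xi k - xi l)).
  apply: LD_mul; first by apply: LD_pw; apply: hxi_nz.
  apply: LD_prod => l lk; apply/eqP => /hxi_inj e.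
  by rewrite e eqxx in lk.
rewrite h1 h2 /Ek subr0 natrM natrD.
have -> : (((n%:Z - 2 * m%:Z + 2)%:~R) : C) = n%:R - 2 * m%:R + 2.
  by rewrite !(intrD, intrM, intrN) /=.
have := hxi_nz k => xk.
by field.
Qed.


Definition Astar := \prod_(j < n) ((z j)^*) ^+ 2.
Definition Bstar := \prod_(l < m) ((xi l)^*) ^+ 4.
Definition Mst := \prod_(l < m) pw (((xi l)^*)^-1) 4.

Lemma P0_horner w : P0.[w] = w ^+ (2 * m)%N * NN.[w].
Proof. by rewrite /P0 hornerM /pw horner_exp hornerXsubC subr0. Qed.
Lemma D0_horner w : D0.[w] = w ^+ (n + 2)%N * MM.[w].
Proof. by rewrite /D0 hornerM /pw horner_exp hornerXsubC subr0. Qed.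

Lemma symP0 w : w != 0 ->
  (P0.[(w^*)^-1])^* * w ^+ (2 * m + 2 * n)%N = Astar * NN.[w].
Proof.
move=> w0; rewrite /P0 hornerM rmorphM /= exprD.
have -> : w ^+ (2 * n)%N = \prod_(j < n) w ^+ 2 by rewrite prod_const_ord -exprM.
rewrite mulrACA refl_pw // /NN refl_prod // conjC0 mul0r subr0 expr1n mul1r.
rewrite /Astar horner_prod -big_split; apply: eq_bigr => j _ /=.
rewrite /pw horner_exp hornerXsubC.
have e : 1 - (z j)^* * w = - ((z j)^* * (w - z j)).
  by rewrite -(zconj j); ring.
by rewrite e; ring.
Qed.

Lemma symD0 w : w != 0 ->
  (D0.[(w^*)^-1])^* * w ^+ (n + 2 + 4 * m)%N = Bstar * Mst.[w].
Proof.
move=> w0; rewrite /D0 hornerM rmorphM /= exprD.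
have -> : w ^+ (4 * m)%N = \prod_(l < m) w ^+ 4 by rewrite prod_const_ord -exprM.
rewrite mulrACA refl_pw // /MM refl_prod // conjC0 mul0r subr0 expr1n mul1r.
rewrite /Bstar /Mst horner_prod -big_split; apply: eq_bigr => l _ /=.
rewrite /pw horner_exp hornerXsubC.
have xl : (xi l)^* != 0 by rewrite conjC_eq0.
have e : 1 - (xi l)^* * w = - ((xi l)^* * (w - ((xi l)^*)^-1)).
  by rewrite mulrBr mulfV //; ring.
by rewrite e; ring.
Qed.

Lemma stat_back k (P D : {poly C}) (kp : C) : P != 0 -> D != 0 -> kp != 0 ->
  P * D0 = kp *: (D * P0) -> ord_at P D (xi k) = - 4 ->
  sqrt_res_vanishes P D (xi k) -> Ek k = 0.
Proof.
move=> Pn0 Dn0 kp0 id ordk sr.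
have [eP nP] := loc_decomp (xi k) Pn0.
have [eD nD] := loc_decomp (xi k) Dn0.
have de : mup (xi k) D = (mup (xi k) P + 4)%N by move: ordk; rewrite /ord_at; lia.
have nD' : (loc_num D (xi k)).[xi k] != 0 by exact: nD.
have nP' : (loc_num P (xi k)).[xi k] != 0 by exact: nP.
have lv : loc_val P D (xi k) != 0.
  by rewrite /loc_val mulf_neq0 // invr_eq0.
have ld := der_of_sqrt_res lv sr.
move: ld; rewrite /loc_der => /eqP; rewrite mulf_eq0 invr_eq0 expf_eq0 (negbTE nD') andbF orbF.
move/eqP => h3.
move: nP' nD' eP eD h3.
set Pk := loc_num P (xi k); set Dk := loc_num D (xi k).
set Xp := ('X - (xi k)%:P) ^+ mup (xi k) P.
clear nP nD; move=> nP nD eP eD h3.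
have Xq : ('X - (xi k)%:P) ^+ mup (xi k) D = Xp * pw (xi k) 4 by rewrite de exprD.
have id2 : Pk * D0k k * (Xp * pw (xi k) 4) = kp%:P * (Dk * P0) * (Xp * pw (xi k) 4).
  have L : Pk * D0k k * (Xp * pw (xi k) 4) = P * D0.
    by rewrite [in RHS]eP (D0_split k); ring.
  have Rr : kp%:P * (Dk * P0) * (Xp * pw (xi k) 4) = kp *: (D * P0).
    by rewrite [in RHS]eD Xq -mul_polyC; ring.
  by rewrite L Rr id.
have nz : Xp * pw (xi k) 4 != 0 by rewrite mulf_neq0 ?pw_neq0 // expf_neq0 // polyXsubC_eq0.
have id3 := mulIf nz id2.
have S := alg_from_id id3 nD kp0 h3.
have vu : P0.[xi k] * (D0k k).[xi k] != 0 by rewrite mulf_neq0 ?P0_ne_xi ?D0k_ne_xi.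
move: S; rewrite (S_Ek k) => /eqP; rewrite mulf_eq0 oppr_eq0 (negbTE vu) /=.
by move/eqP.
Qed.


Lemma Astar_neq0 : Astar != 0.
Proof.
rewrite /Astar prodf_seq_neq0; apply/allP => j _; apply/implyP => _.
by rewrite expf_neq0 // conjC_eq0 z_nz.
Qed.

Lemma ev_of_id (P D : {poly C}) kp y : P * D0 = kp *: (D * P0) ->
  D.[y] != 0 -> D0.[y] != 0 -> P.[y] / D.[y] = kp * P0.[y] / D0.[y].
Proof.
move=> id Dy D0y.
have e : P.[y] * D0.[y] = kp * (D.[y] * P0.[y]) by rewrite -hornerM id hornerZ hornerM.
rewrite -(mulfK D0y P.[y]) e; field.
by rewrite Dy D0y.
Qed.

Lemma H_at (kp w : C) : w != 0 -> D0.[w] != 0 -> D0.[(w^*)^-1] != 0 ->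
  kp * P0.[w] / D0.[w] = w ^- 4 * (kp * P0.[(w^*)^-1] / D0.[(w^*)^-1])^* ->
  NN.[w] * ((kp * Bstar) * Mst.[w] - (kp^* * Astar) * MM.[w]) = 0.
Proof.
move=> w0 D0w D0u S.
have W1 : w ^+ (2 * m + 2 * n)%N != 0 by rewrite expf_neq0.
have W2 : w ^+ (n + 2 + 4 * m)%N != 0 by rewrite expf_neq0.
have e1 : (P0.[(w^*)^-1])^* = Astar * NN.[w] / w ^+ (2 * m + 2 * n)%N.
  by rewrite -(symP0 w0) mulfK.
have e2 : (D0.[(w^*)^-1])^* = Bstar * Mst.[w] / w ^+ (n + 2 + 4 * m)%N.
  by rewrite -(symD0 w0) mulfK.
have mm0 : MM.[w] != 0 by move: D0w; rewrite D0_horner mulf_eq0 negb_or => /andP[].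
have bm0 : Bstar * Mst.[w] != 0.
  by rewrite -(symD0 w0) mulf_neq0 // conjC_eq0.
have B0 : Bstar != 0 by move: bm0; rewrite mulf_eq0 negb_or => /andP[].
have ms0 : Mst.[w] != 0 by move: bm0; rewrite mulf_eq0 negb_or => /andP[].
have e3 : (kp * P0.[(w^*)^-1] / D0.[(w^*)^-1])^* =
    kp^* * (Astar * NN.[w] / w ^+ (2 * m + 2 * n)%N) / (Bstar * Mst.[w] / w ^+ (n + 2 + 4 * m)%N).
  by rewrite -e1 -e2 !rmorphM /= fmorphV.
move: S; rewrite e3 P0_horner D0_horner => /eqP.
rewrite -subr_eq0 symdiff // => /eqP.
have nzq : w ^+ (2 * m)%N / (w ^+ (n + 2)%N * MM.[w] * Bstar * Mst.[w]) != 0.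
  by rewrite mulf_neq0 ?invr_eq0 ?mulf_neq0 ?expf_neq0.
by move/eqP; rewrite -mulrA mulf_eq0 (negbTE nzq) orbF => /eqP.
Qed.

Lemma inv_back (P D : {poly C}) kp : P != 0 -> D != 0 -> kp != 0 ->
  P * D0 = kp *: (D * P0) ->
  (forall w : C, w != 0 -> D.[w] != 0 -> D.[(w^*)^-1] != 0 ->
         P.[w] / D.[w] = w ^- 4 * (P.[(w^*)^-1] / D.[(w^*)^-1])^*) ->
  forall k, exists l, xi l = ((xi k)^*)^-1.
Proof.
move=> Pn0 Dn0 kp0 id sym k.
pose H := NN * ((kp * Bstar) *: Mst - (kp^* * Astar) *: MM).
have Hw : forall w, w != 0 -> D.[w] != 0 -> D.[(w^*)^-1] != 0 -> D0.[w] != 0 ->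
    D0.[(w^*)^-1] != 0 -> H.[w] = 0.
  move=> w w0 Dw Du D0w D0u.
  have S := sym w w0 Dw Du.
  rewrite (ev_of_id id) // (ev_of_id id) // in S.
  rewrite /H hornerM hornerD hornerN !hornerZ.
  exact: H_at.
have HE : H = NN * ((kp * Bstar) *: Mst - (kp^* * Astar) *: MM) by [].
clearbody H.
have DD0 : D * D0 != 0 by rewrite mulf_neq0 ?D0_neq0.
have [rs ers] := closed_field_poly_normal (D * D0).
pose E := \prod_(r <- rs) ('X - ((r^*)^-1)%:P).
have En0 : E != 0.
  by rewrite /E prodf_seq_neq0; apply/allP => r _; apply/implyP => _; rewrite polyXsubC_eq0.
have G0 : H * 'X * (D * D0) * E = 0.
  apply/eqP; apply: contraT => /closed_nonrootP [w].
  rewrite /root !hornerM hornerX !mulf_eq0 !negb_or.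
  move=> /andP[/and4P[/andP[Hw0 w0] Dw pw0 MMw] Ew].
  have D0w : D0.[w] != 0 by rewrite /D0 hornerM mulf_neq0.
  suff Du : D.[(w^*)^-1] * D0.[(w^*)^-1] != 0.
    move: Du; rewrite mulf_eq0 negb_or => /andP[Du D0u].
    by rewrite (Hw w) ?eqxx in Hw0.
  apply/negP => /eqP Du0.
  have Du : (D * D0).[(w^*)^-1] = 0 by rewrite hornerM.
  move: Du; rewrite [in X in X = _]ers hornerZ horner_prod => /eqP.
  rewrite mulf_eq0 lead_coef_eq0 => /orP[/eqP e0|]; first by move: DD0; rewrite e0 eqxx.
  rewrite prodf_seq_eq0 => /hasP [r rin].
  rewrite hornerXsubC subr_eq0 => /eqP ur.
  move: Ew; rewrite /E horner_prod; move/eqP; apply.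
  apply/eqP; rewrite prodf_seq_eq0; apply/hasP; exists r => //.
  by rewrite hornerXsubC -ur fmorphV /= conjCK invrK subrr.
have H0 : H = 0.
  move: G0 => /eqP; rewrite mulf_eq0 (negbTE En0) orbF mulf_eq0 (negbTE DD0) orbF mulf_eq0 polyX_eq0 orbF.
  by move/eqP.
move: H0; rewrite HE => /eqP; rewrite mulf_eq0 (negbTE NN_neq0) /= subr_eq0 => /eqP e.
have := congr1 (fun p => p.[((xi k)^*)^-1]) e; rewrite /= !hornerZ.
have -> : Mst.[((xi k)^*)^-1] = 0.
  rewrite /Mst horner_prod (bigD1 k) //= /pw horner_exp hornerXsubC subrr expr0n /=.
  by rewrite mul0r.
rewrite mulr0 => /esym /eqP; rewrite mulf_eq0 mulf_eq0 conjC_eq0 (negbTE kp0).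
rewrite (negbTE Astar_neq0) /= /MM horner_prod.
rewrite prodf_seq_eq0 => /hasP [l _ /=].
rewrite /pw horner_exp hornerXsubC expf_eq0 subr_eq0 => /andP[_ /eqP el].
by exists l; rewrite el.
Qed.


Lemma sym_fwd (kp w : C) : w != 0 -> D0.[w] != 0 -> D0.[(w^*)^-1] != 0 ->
  (kp * Bstar) * Mst.[w] = (kp^* * Astar) * MM.[w] ->
  kp * P0.[w] / D0.[w] = w ^- 4 * (kp * P0.[(w^*)^-1] / D0.[(w^*)^-1])^*.
Proof.
move=> w0 D0w D0u hk.
have W1 : w ^+ (2 * m + 2 * n)%N != 0 by rewrite expf_neq0.
have W2 : w ^+ (n + 2 + 4 * m)%N != 0 by rewrite expf_neq0.
have e1 : (P0.[(w^*)^-1])^* = Astar * NN.[w] / w ^+ (2 * m + 2 * n)%N.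
  by rewrite -(symP0 w0) mulfK.
have e2 : (D0.[(w^*)^-1])^* = Bstar * Mst.[w] / w ^+ (n + 2 + 4 * m)%N.
  by rewrite -(symD0 w0) mulfK.
have mm0 : MM.[w] != 0 by move: D0w; rewrite D0_horner mulf_eq0 negb_or => /andP[].
have bm0 : Bstar * Mst.[w] != 0.
  by rewrite -(symD0 w0) mulf_neq0 // conjC_eq0.
have B0 : Bstar != 0 by move: bm0; rewrite mulf_eq0 negb_or => /andP[].
have ms0 : Mst.[w] != 0 by move: bm0; rewrite mulf_eq0 negb_or => /andP[].
have e3 : (kp * P0.[(w^*)^-1] / D0.[(w^*)^-1])^* =
    kp^* * (Astar * NN.[w] / w ^+ (2 * m + 2 * n)%N) / (Bstar * Mst.[w] / w ^+ (n + 2 + 4 * m)%N).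
  by rewrite -e1 -e2 !rmorphM /= fmorphV.
rewrite e3 P0_horner D0_horner; apply/eqP; rewrite -subr_eq0 symdiff //.
by rewrite hk subrr mulr0 !mul0r.
Qed.

Lemma ordC (c : C) a : c != 0 -> ord_at (c%:P * P0) D0 a = ord_at P0 D0 a.
Proof. by move=> c0; rewrite /ord_at mupC. Qed.

Lemma size_P0 : size P0 = (2 * m + 2 * n).+1%N.
Proof.
have [mN sN] := monic_prod_pw xpredT z (fun _ => 2%N).
rewrite /P0 size_Mmonic ?pw_neq0 // /pw size_exp_XsubC /NN sN sum_const_ord.
rewrite addSn /=; lia.
Qed.

Lemma size_D0 : size D0 = (n + 2 + 4 * m).+1%N.
Proof.
have [mN sN] := monic_prod_pw xpredT xi (fun _ => 4%N).
rewrite /D0 size_Mmonic ?pw_neq0 // /pw size_exp_XsubC /MM sN sum_const_ord.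
rewrite addSn /=; lia.
Qed.

Lemma ord_eq (P D : {poly C}) :
  (forall j, ord_at P D (z j) = 2) ->
  (forall k, ord_at P D (xi k) = - 4) ->
  ord_at P D 0 = - ((n%:Z) + 2 - 2 * (m%:Z)) ->
  (forall a : C, a != 0 -> (forall j, a != z j) -> (forall k, a != xi k) ->
         ord_at P D a = 0) ->
  forall a, ord_at P D a = ord_at P0 D0 a.
Proof.
move=> oz ox o0 oth a.
case: (eqVneq a 0) => [->|a0]; first by rewrite o0 ord_0.
case: (pickP (fun j => z j == a)) => [j /eqP <-|nz]; first by rewrite oz ord_z.
case: (pickP (fun k => xi k == a)) => [k /eqP <-|nx]; first by rewrite ox ord_xi.
have hz : forall j, a != z j by move=> j; rewrite eq_sym nz.
have hx : forall k, a != xi k by move=> k; rewrite eq_sym nx.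
by rewrite oth ?ord_other.
Qed.

Lemma forward :
  (forall k, exists l, xi l = ((xi k)^*)^-1) -> (forall k, Ek k = 0) ->
  exists P D : {poly C}, in_QD z xi P D.
Proof.
move=> inv stat.
pose sg k := odflt k [pick l | xi l == ((xi k)^*)^-1].
have hsg : forall k, xi (sg k) = ((xi k)^*)^-1.
  move=> k; rewrite /sg; case: pickP => [l /eqP //|none].
  by have [l el] := inv k; move: (none l); rewrite el eqxx.
have sginj : injective sg.
  move=> a b e; apply: hxi_inj.
  have : ((xi a)^*)^-1 = ((xi b)^*)^-1 by rewrite -!hsg e.
  by move/invr_inj/(congr1 Num.conj); rewrite !conjCK.
pose p := \prod_(k < m) xi k.
have p0 : p != 0 by rewrite /p prodf_seq_neq0; apply/allP => k _; apply/implyP => _.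
have pc : p^* = p^-1.
  rewrite /p rmorph_prod (reindex_inj sginj) /= -prodfV; apply: eq_bigr => k _.
  by rewrite hsg fmorphV /= conjCK.
pose zc := \prod_(j < n) (z j)^*.
have zz : \prod_(j < n) z j * zc = 1.
  by rewrite /zc -big_split /=; apply: big1 => j _; apply: zconj.
have zc0 : zc != 0.
  by rewrite /zc prodf_seq_neq0; apply/allP => j _; apply/implyP => _; rewrite conjC_eq0 z_nz.
pose c := zc * p ^+ 2.
have c0 : c != 0 by rewrite mulf_neq0 ?expf_neq0.
have MstE : Mst = MM.
  rewrite /Mst /MM (reindex_inj sginj) /=; apply: eq_bigr => l _.
  by rewrite hsg fmorphV /= conjCK invrK.
have cB : c * Bstar = c^* * Astar.
  have -> : Bstar = p ^- 4.
    have -> : Bstar = (p^*) ^+ 4 by rewrite /Bstar /p rmorph_prod prodrXl.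
    by rewrite pc exprVn.
  have -> : Astar = zc ^+ 2 by rewrite /Astar prodrXl.
  have -> : c^* = (\prod_(j < n) z j) * p ^- 2.
    by rewrite /c rmorphM rmorphXn /= pc exprVn /zc rmorph_prod; congr (_ * _);
       apply: eq_bigr => j _; rewrite /= conjCK.
  rewrite /c; move: zz; set Z := \prod_(j < n) z j => zz.
  have Z0 : Z != 0.
    by apply/eqP => Z0; move: zz; rewrite Z0 mul0r => /eqP; rewrite eq_sym oner_eq0.
  have -> : zc = Z^-1 by rewrite -(mulKf Z0 zc) zz mulr1.
  by field; rewrite ?p0 ?Z0.
have sr : forall k, sqrt_res_vanishes (c%:P * P0) D0 (xi k).
  move=> k.
  have mP : mup (xi k) (c%:P * P0) = 0%N.
    rewrite mupC // mupP0 eq_sym (negbTE (hxi_nz k)) sum_if_none // => j _.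
    by rewrite eq_sym hxi_z.
  have mD : mup (xi k) D0 = 4%N.
    by rewrite mupD0 eq_sym (negbTE (hxi_nz k)) (@sum_if_one _ _ xpredT _ _ _ k).
  have lP : loc_num (c%:P * P0) (xi k) = c%:P * P0 by rewrite /loc_num mP expr0 divp1.
  have lD : loc_num D0 (xi k) = D0k k.
    by rewrite /loc_num mD (D0_split k) mulrC /pw mulpK // expf_neq0 // polyXsubC_eq0.
  apply: sqrt_res_of.
    rewrite /loc_val lP lD hornerCM mulf_neq0 ?invr_eq0 ?D0k_ne_xi //.
    by rewrite mulf_neq0 ?P0_ne_xi.
  have dd : (c%:P * P0)^`() = c%:P * P0^`() by rewrite derivM derivC mul0r add0r.
  rewrite /loc_der lP lD dd !hornerCM.
  have -> : c * P0^`().[xi k] * (D0k k).[xi k] - c * P0.[xi k] * (D0k k)^`().[xi k]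
    = c * (P0^`().[xi k] * (D0k k).[xi k] - P0.[xi k] * (D0k k)^`().[xi k]) by ring.
  by rewrite (S_Ek k) stat !mulr0 mul0r.
exists (c%:P * P0), D0.
split; first by rewrite mulf_neq0 ?polyC_eq0 ?P0_neq0.
split; first exact: D0_neq0.
split.
  move=> w w0 Dw Du; rewrite !hornerCM.
  by apply: sym_fwd => //; rewrite MstE cB.
split; first by move=> j; rewrite ordC // ord_z.
split; first by split => // k; rewrite ordC // ord_xi.
split; first split.
- by rewrite ordC // ord_0.
- rewrite /qd_ord_inf size_Cmul // size_P0 size_D0; lia.
by move=> a a0 az ax; rewrite ordC // ord_other.
Qed.

End Main.

Local Open Scope complex_scope.

Theorem mainTheorem4 (R : realType) (m n : nat) (z : 'I_n -> R[i]) (xi : 'I_m -> R[i])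
  (hz_circ : forall j, `|z j| = 1)
  (hz_inj : injective z)
  (hxi_inj : injective xi)
  (hxi_nz : forall k, xi k != 0)
  (hxi_z : forall k j, xi k != z j) :
  ((forall k, exists l, xi l = ((xi k)^*)^-1) /\
   (forall k : 'I_m,
      - (\sum_(j < n) 2%:R / (xi k - z j))
      + (\sum_(l < m | l != k) 4%:R / (xi k - xi l))
      + ((n%:Z - 2 * m%:Z + 2)%:~R) / xi k = 0))
  <->
  (exists P D : {poly R[i]}, in_QD z xi P D).
Proof.
split.
- case=> inv stat; exact: (forward hz_circ hz_inj hxi_inj hxi_nz hxi_z inv stat).
- case=> P [D [Pn0 [Dn0 [sym [oz [[_ _ ox sr] [[o0 oinf] oth]]]]]]].
  have oe := ord_eq hz_circ hz_inj hxi_inj hxi_nz hxi_z oz ox o0 oth.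
  have [kp kp0 id] : exists2 kp, kp != 0 & P * D0 n xi = kp *: (D * P0 m z).
    apply: mup_eq_prop.
    + by rewrite mulf_neq0 // D0_neq0.
    + by rewrite mulf_neq0 // P0_neq0.
    + move=> a; have := oe a.
      have d0 : D0 n xi != 0 by exact: D0_neq0.
      have p0 : P0 m z != 0 by exact: P0_neq0.
      move: d0 p0; generalize (D0 n xi) (P0 m z) => Dz Pz d0 p0 e.
      rewrite !mupM //; move: e; rewrite /ord_at; lia.
  split.
  + exact: (inv_back hz_circ hxi_nz Pn0 Dn0 kp0 id sym).
  + move=> k; exact: (stat_back hxi_inj hxi_nz hxi_z Pn0 Dn0 kp0 id (ox k) (sr k)).
Qed.
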